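(* For nonzero integers $n$ define $r(n)=\prod_{p\mid n\text{ prime}}\frac{-p^{4-3\operatorname{ord}_p(n)}}{p^3-p-1}$, and let $S=\prod_{p\text{ prime}}(1-p/(p^3-1))$. For $n\ge1$ put $$S_{1,n}=\sum_{i\ge1}\sum_{\substack{j\ge1\\ n\mid ij}}\frac{\mu(j)}{i^2j\varphi(ij)},\qquad S'_{2,n}=\sum_{\substack{i\ge1\\ 2\mid i}}\ \sum_{\substack{j\ge1\\ n\mid ij}}\frac{\mu(j)}{i^2j\,\varphi(ij)}.$$ Then $S_{1,n}=r(n)S$, and $S'_{2,n}=\frac{3}{10}r(n)S$ if $n$ is odd, while $S'_{2,n}=r(n)S$ if $4\mid n$.
   Context: $\mu$ is the Möbius function, $\varphi$ Euler's totient function, and $\operatorname{ord}_p(n)$ the exponent of the prime $p$ in $n$. *)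

(* Defs.v *)
From HB Require Import structures.
From mathcomp Require Import all_boot all_order all_algebra.
From mathcomp Require Import all_classical all_reals all_analysis.
Set Implicit Arguments. Unset Strict Implicit. Unset Printing Implicit Defensive.
Import Order.TTheory GRing.Theory Num.Theory.
Local Open Scope ring_scope.

(* Moebius function: mu(n) = (-1)^(number of prime factors) if n >= 1 is
   squarefree, 0 otherwise (mu 0 := 0, never used). *)
Definition mobius (n : nat) : int :=
  if (0 < n)%N && all (fun p => logn p n == 1%N) (primes n)
  then (-1) ^+ size (primes n) else 0.

Definition r_fun (R : realType) (n : nat) : R :=
  \prod_(p <- primes n)
     (- ((p%:R : R) ^ (4%:Z - 3%:Z * (logn p n)%:Z)) / ((p%:R : R) ^+ 3 - p%:R - 1)).

Definition S_const (R : realType) : R :=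
  limn (fun N : nat => \prod_(p < N | prime p) (1 - (p%:R : R) / ((p%:R : R) ^+ 3 - 1))).

Definition term (R : realType) (i j : nat) : R :=
  (mobius j)%:~R / ((i ^ 2 * j * totient (i * j))%N%:R).

Definition S1 (R : realType) (n : nat) : R :=
  limn (fun N : nat => \sum_(1 <= i < N)
    limn (fun M : nat => \sum_(1 <= j < M | (n %| i * j)%N) term R i j)).

Definition S2' (R : realType) (n : nat) : R :=
  limn (fun N : nat => \sum_(1 <= i < N | (2 %| i)%N)
    limn (fun M : nat => \sum_(1 <= j < M | (n %| i * j)%N) term R i j)).

(* Main.v *)
Require Import Defs.
From HB Require Import structures.
From mathcomp Require Import all_boot all_order all_algebra.
From mathcomp Require Import all_classical all_reals all_analysis.
From mathcomp Require Import ring lra zify.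
Import Order.TTheory GRing.Theory Num.Theory.
Import numFieldNormedType.Exports.
Local Open Scope ring_scope.
Local Open Scope classical_set_scope.

Section PrimeProd.
Variables (T : Type) (idx : T) (op : Monoid.com_law idx).

Lemma pprod_primes (m N : nat) (H : nat -> T) :
  (0 < m)%N -> (forall p, prime p -> (p %| m)%N -> (p < N)%N) ->
  (forall p, prime p -> ~~ (p %| m)%N -> H p = idx) ->
  \big[op/idx]_(p < N | prime p) H p = \big[op/idx]_(p <- primes m) H p.
Proof.
move=> m0 hN hH.
rewrite (bigID (fun p : 'I_N => (p : nat) \in primes m)) /=.
rewrite [X in op _ X]big1 ?Monoid.mulm1; last first.
  move=> i /andP[pi ni]; apply: hH => //.
  by move: ni; rewrite mem_primes pi m0.
rewrite -(big_mkord (fun p => prime p && (p \in primes m))) -big_filter.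
apply: perm_big; apply: uniq_perm.
- by apply: filter_uniq; apply: iota_uniq.
- exact: primes_uniq.
move=> p; rewrite mem_filter mem_index_iota /=.
case pm: (p \in primes m); rewrite ?andbF //=.
move: pm; rewrite mem_primes => /and3P[pp _ pd].
by rewrite pp /= hN.
Qed.

Lemma pprod_ext (M N1 N2 : nat) (H : nat -> T) :
  (forall p, prime p -> (M <= p)%N -> H p = idx) ->
  (M <= N1)%N -> (M <= N2)%N ->
  \big[op/idx]_(p < N1 | prime p) H p = \big[op/idx]_(p < N2 | prime p) H p.
Proof.
move=> hH h1 h2.
suff E : forall N, (M <= N)%N ->
  \big[op/idx]_(p < N | prime p) H p = \big[op/idx]_(p < M | prime p) H p.
  by rewrite E // E.
move=> N hN.
rewrite -!(big_mkord (fun p => prime p)) (big_cat_nat (leq0n M) hN) /=.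
rewrite [X in op _ X]big1_seq ?Monoid.mulm1 // => i /andP[pi].
by rewrite mem_index_iota => /andP[hi _]; apply: hH.
Qed.

End PrimeProd.

Section NatLemmas.
Local Open Scope nat_scope.

Lemma nat_pprod (m N : nat) : (0 < m)%N -> (m < N)%N ->
  m = \prod_(p < N | prime p) p ^ logn p m.
Proof.
move=> m0 mN.
rewrite (@pprod_primes _ 1 muln m N (fun p => p ^ logn p m)) //.
- by rewrite {1}[m]prod_prime_decomp // prime_decompE big_map.
- by move=> p _ /(dvdn_leq m0) pm; apply: leq_ltn_trans mN.
- by move=> p pp nd; rewrite logn_coprime ?expn0 // prime_coprime.
Qed.

Definition phl (p k : nat) : nat := if k is k'.+1 then (p.-1 * p ^ k')%N else 1%N.

Lemma totient_pprod (m N : nat) : (0 < m)%N ->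
  (forall p, prime p -> (p %| m)%N -> (p < N)%N) ->
  totient m = \prod_(p < N | prime p) phl p (logn p m).
Proof.
move=> m0 hN.
rewrite (@pprod_primes _ 1 muln m N (fun p => phl p (logn p m))) //.
- rewrite totientE //; apply: eq_big_seq => p; rewrite -logn_gt0.
  by case: (logn p m).
- by move=> p pp nd; rewrite logn_coprime // prime_coprime.
Qed.

Lemma dvdn_logP (n m : nat) : (0 < n)%N -> (0 < m)%N ->
  reflect (forall p, prime p -> logn p n <= logn p m)%N (n %| m)%N.
Proof.
move=> n0 m0; apply: (iffP (dvdn_partP _ n0)) => H p.
- move=> pp; case: (posnP (logn p n)) => [-> //|].
  rewrite logn_gt0 => /H; rewrite p_part pfactor_dvdn //.
- rewrite mem_primes => /and3P[pp _ _].
  by rewrite p_part pfactor_dvdn // H.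
Qed.

End NatLemmas.

Definition primeI (N : nat) : pred 'I_N := fun i => prime i.
Definition PT (N : nat) := {x in primeI N}.
Definition dd N K (f : {ffun PT N -> 'I_K}) : nat :=
  (\prod_(x : PT N) (val (val x)) ^ (f x))%N.

Arguments dd {N K} f.

Lemma PT_prime N (x : PT N) : prime (val (val x)).
Proof. exact: (valP x). Qed.

Lemma conv_pt (R : comNzRingType) N (F : nat -> R) :
  \prod_(p < N | prime p) F p = \prod_(x : PT N) F (val (val x)).
Proof.
rewrite -(big_sub (primeI N) (fun p : 'I_N => F p)).
by apply: eq_bigl.
Qed.

Section NatDD.
Local Open Scope nat_scope.

Lemma logn_prodn p (I : finType) (F : I -> nat) : (forall i, 0 < F i) ->
  logn p (\prod_i F i) = \sum_i logn p (F i).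
Proof.
move=> Fpos.
suff: logn p (\prod_i F i) = \sum_i logn p (F i) /\ 0 < \prod_i F i by case.
elim/big_rec2: _ => [|i b a _ [ih apos]]; first by rewrite logn1.
by rewrite lognM // ?ih // muln_gt0 Fpos.
Qed.

Variables (N K : nat).
Implicit Types f : {ffun PT N -> 'I_K}.

Lemma dd_gt0 f : 0 < dd f.
Proof.
by apply: prodn_gt0 => x; rewrite expn_gt0 prime_gt0 ?PT_prime.
Qed.

Lemma logn_dd f q : logn q (dd f) = \sum_(x : PT N) (f x * (q == val (val x))).
Proof.
rewrite /dd logn_prodn; last by move=> x; rewrite expn_gt0 prime_gt0 ?PT_prime.
by apply: eq_bigr => x _; rewrite lognX logn_prime ?PT_prime.
Qed.

Lemma logn_dd_in f (x : PT N) : logn (val (val x)) (dd f) = f x.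
Proof.
rewrite logn_dd (bigD1 x) //= eqxx muln1 big1 ?addn0 // => y ne.
rewrite (_ : (_ == _) = false) ?muln0 //; apply/negbTE.
apply: contra ne => /eqP e; apply/eqP; apply: val_inj; exact: val_inj.
Qed.

Lemma logn_dd_out f q : N <= q -> logn q (dd f) = 0.
Proof.
move=> hq; rewrite logn_dd big1 // => y _.
by rewrite gtn_eqF ?muln0 // (leq_trans (ltn_ord _) hq).
Qed.

Lemma dd_inj : injective (@dd N K).
Proof.
move=> f1 f2 E; apply/ffunP => x; apply: val_inj.
by rewrite /= -!(logn_dd_in _ x) E.
Qed.

Lemma dd_le f : dd f <= \prod_(x : PT N) (val (val x)) ^ K.
Proof.
apply: leq_prod => x _; apply: leq_pexp2l; first by rewrite prime_gt0 ?PT_prime.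
exact: ltnW (ltn_ord _).
Qed.

End NatDD.

Lemma lognNprime q m : ~~ prime q -> logn q m = 0%N.
Proof. by move=> qn; rewrite lognE (negbTE qn). Qed.


Section Comb.
Variable R : realType.

Lemma prod_sum_dd (G : nat -> R) (gq : nat -> nat -> R) B N K :
  (forall d N', (0 < d)%N -> (B <= N')%N -> (d < N')%N ->
     G d = \prod_(p < N' | prime p) gq p (logn p d)) ->
  (forall p, prime p -> (B <= p)%N -> gq p 0%N = 1) ->
  (B <= N)%N ->
  \prod_(p < N | prime p) \sum_(a < K) gq p a =
  \sum_(f : {ffun PT N -> 'I_K}) G (dd f).
Proof.
move=> hm h0 hB.
rewrite (@conv_pt _ _ (fun p => \sum_(a < K) gq p a)) bigA_distr_bigA /=.
apply: eq_bigr => f _.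
have E : G (dd f) = \prod_(p < maxn N (dd f).+1 | prime p) gq p (logn p (dd f)).
  apply: hm; [exact: dd_gt0 | by rewrite leq_max hB | by rewrite leq_max ltnSn orbT].
rewrite E.
rewrite (@pprod_ext R 1 *%R N (maxn N (dd f).+1) N
            (fun p => gq p (logn p (dd f)))); first last.
- exact: leqnn.
- by rewrite leq_max leqnn.
- by move=> p pp hp; rewrite logn_dd_out // h0 // (leq_trans hB hp).
rewrite (@conv_pt _ _ (fun p => gq p (logn p (dd f)))); apply: eq_bigr => x _; by rewrite logn_dd_in.
Qed.

Lemma sum_dd_split (G : nat -> R) N K : (N <= K)%N ->
  \sum_(f : {ffun PT N.+1 -> 'I_K.+1}) G (dd f) =
  \sum_(1 <= d < N.+1) G d +
  \sum_(f : {ffun PT N.+1 -> 'I_K.+1} | (N.+1 <= dd f)%N) G (dd f).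
Proof.
move=> hNK.
rewrite (bigID (fun f => (dd f < N.+1)%N)) /=; congr (_ + _); last first.
  by apply: eq_bigl => f; rewrite -leqNgt.
rewrite big_geq_mkord; symmetry.
rewrite (reindex_onto (fun f : {ffun PT N.+1 -> 'I_K.+1} => (inord (dd f) : 'I_N.+1))
   (fun d : 'I_N.+1 => [ffun x : PT N.+1 => (inord (logn (val (val x)) d) : 'I_K.+1)])) /=.
  apply: eq_big => f.
    case: (ltnP (dd f) N.+1) => hf.
      rewrite inordK // dd_gt0 /=; apply/eqP/ffunP => x.
      by rewrite ffunE logn_dd_in inord_val.
    have -> : (inord (dd f) : 'I_N.+1) = ord0.
      by rewrite /inord /insubd insubN // -leqNgt.
    by [].
  case: (ltnP (dd f) N.+1) => hf; first by rewrite inordK.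
  have -> : (inord (dd f) : 'I_N.+1) = ord0.
    by rewrite /inord /insubd insubN // -leqNgt.
  by [].
move=> d /= hd; apply: val_inj => /=.
set f := [ffun x => _].
suff -> : dd f = d by rewrite inordK.
apply: eqn_from_log; [exact: dd_gt0 | exact: hd | move=> q].
case: (boolP (prime q)) => qp; last by rewrite !lognNprime.
case: (ltnP q N.+1) => hq; last first.
  rewrite logn_dd_out // ltn_log0 //; exact: leq_trans (ltn_ord d) hq.
have qI : (Ordinal hq) \in primeI N.+1 by [].
pose x : PT N.+1 := exist _ (Ordinal hq) qI.
rewrite (_ : q = val (val x)) // logn_dd_in ffunE inordK //.
change (logn q d < K.+1)%N.
have h1 := ltn_logl q hd. have h2 := ltn_ord d. lia.
Qed.

Lemma sum_sub_le (I : finType) (S P : pred I) (F : I -> R) :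
  (forall i, S i -> P i) -> (forall i, 0 <= F i) ->
  \sum_(i | S i) F i <= \sum_(i | P i) F i.
Proof.
move=> H F0; rewrite [X in X <= _]big_mkcond [X in _ <= X]big_mkcond /=.
apply: ler_sum => i _; case: (boolP (S i)) => [/H -> //|_].
by case: (P i).
Qed.

Lemma sum_dd_tail (G : nat -> R) N K : exists Q : nat,
  \sum_(f : {ffun PT N -> 'I_K} | (N <= dd f)%N) `|G (dd f)| <=
  \sum_(N <= d < Q) `|G d|.
Proof.
set Qn := (\prod_(x : PT N) (val (val x)) ^ K)%N.
exists Qn.+1.
pose h := fun f : {ffun PT N -> 'I_K} => (inord (dd f) : 'I_Qn.+1).
rewrite (eq_bigr (fun f => `|G (h f)|)); last first.
  by move=> f _; rewrite /h inordK // ltnS dd_le.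
rewrite -(big_imset (fun y : 'I_Qn.+1 => `|G y|) (h := h)
          (A := [pred f : {ffun PT N -> 'I_K} | (N <= dd f)%N])) /=; last first.
  move=> f1 f2 _ _ /(congr1 val) /=; rewrite !inordK ?ltnS ?dd_le //.
  exact: dd_inj.
rewrite big_geq_mkord.
apply: sum_sub_le => // y /imsetP [f hf ->].
by rewrite /h inordK ?ltnS ?dd_le //.
Qed.

End Comb.


Section Euler.
Variable R : realType.

Lemma cvg_bigprod (I : Type) (r : seq I) (P : pred I) (F : I -> nat -> R) (l : I -> R) :
  (forall i, P i -> F i n @[n --> \oo] --> l i) ->
  \prod_(i <- r | P i) F i K @[K --> \oo] --> \prod_(i <- r | P i) l i.
Proof.
move=> H; elim: r => [|i r ih].
  under eq_fun do rewrite big_nil; rewrite big_nil; exact: cvg_cst.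
under eq_fun do rewrite big_cons; rewrite big_cons.
case: (boolP (P i)) => Pi //.
exact: cvgM (H i Pi) ih.
Qed.

Lemma sum_inv_sq (N : nat) :
  \sum_(k < N.+1 | (0 < k)%N) ((k%:R : R) ^+ 2)^-1 <= 2 - 2 / N.+1%:R.
Proof.
elim: N => [|N ih].
  by rewrite big_mkcond big_ord_recr big_ord0 /= add0r divr1 subrr.
rewrite big_mkcond big_ord_recr /= -big_mkcond /=.
apply: (le_trans (lerD ih (lexx _))).
rewrite -[N.+1.+1%:R]natr1 -[N.+1%:R]natr1.
have h0 : (0 : R) <= N%:R by rewrite ler0n.
set x := (N%:R : R).
rewrite -natr1 -/x.
rewrite -subr_ge0.
have -> : 2 - 2 / (x + 1 + 1) - (2 - 2 / (x + 1) + ((x + 1) ^+ 2)^-1) =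
   x / ((x + 1) ^+ 2 * (x + 2)).
  by field; apply/andP; split; rewrite lt0r_neq0 // ?ltr_wpDl //; lra.
by apply: divr_ge0 => //; apply: mulr_ge0; [apply: exprn_ge0|]; lra.
Qed.

Lemma sum_inv_sq_pr (N : nat) :
  \sum_(p < N | prime p) ((p%:R : R) ^+ 2)^-1 <= 2.
Proof.
case: N => [|M]; first by rewrite big_ord0.
apply: le_trans (_ : _ <= \sum_(k < M.+1 | (0 < k)%N) ((k%:R : R) ^+ 2)^-1) _.
  apply: sum_sub_le; first by move=> i /prime_gt0.
  by move=> i; rewrite invr_ge0 exprn_ge0.
apply: le_trans (sum_inv_sq M) _.
by rewrite gerBl divr_ge0.
Qed.

Lemma prod_bound (c : R) N : 0 <= c ->
  \prod_(p < N | prime p) (1 + c / ((p%:R : R) ^+ 2)) <= expR (2 * c).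
Proof.
move=> c0.
apply: le_trans (_ : _ <= \prod_(p < N | prime p) expR (c / ((p%:R : R) ^+ 2))) _.
  apply: ler_prod => p pp; rewrite expR_ge1Dx andbT.
  by rewrite addr_ge0 // divr_ge0 // exprn_ge0.
rewrite -expR_sum ler_expR.
under eq_bigr do rewrite mulrC.
rewrite -mulr_suml ler_wpM2r //.
exact: sum_inv_sq_pr.
Qed.

Lemma sum1_nd (h : nat -> R) : (forall d, 0 <= h d) ->
  {homo (fun N => \sum_(1 <= d < N) h d) : m n / (m <= n)%N >-> m <= n}.
Proof.
move=> h0 m n mn /=.
case: m mn => [|m] mn.
  by rewrite big_geq // sumr_ge0.
rewrite (@big_cat_nat _ _ _ m.+1 1 n) //= lerDl.
by apply: sumr_ge0 => *.
Qed.

Lemma euler (g : nat -> R) (gp : nat -> nat -> R) (L : nat -> R) (B : nat) (c : R) :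
  0 <= c ->
  (forall d N, (0 < d)%N -> (B <= N)%N -> (d < N)%N ->
     g d = \prod_(p < N | prime p) gp p (logn p d)) ->
  (forall p, prime p -> (B <= p)%N -> gp p 0%N = 1) ->
  (forall p, prime p -> \sum_(a < K) gp p a @[K --> \oo] --> L p) ->
  (forall p K, prime p -> \sum_(a < K) `|gp p a| <= 1 + c / ((p%:R : R) ^+ 2)) ->
  exists l : R, (\sum_(1 <= d < N) g d @[N --> \oo] --> l) /\
            (\prod_(p < N | prime p) L p @[N --> \oo] --> l).
Proof.
move=> c0 hm h0 hL hA.
pose C := expR (2 * c).
have hmA : forall d N, (0 < d)%N -> (B <= N)%N -> (d < N)%N ->
     `|g d| = \prod_(p < N | prime p) `|gp p (logn p d)|.
  by move=> d N d0 hB dN; rewrite (hm d N) // normr_prod.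
have h0A : forall p, prime p -> (B <= p)%N -> `|gp p 0%N| = 1.
  by move=> p pp hp; rewrite h0 // normr1.
have key : forall (G : nat -> R) (gq : nat -> nat -> R) M K,
    (forall d N, (0 < d)%N -> (B <= N)%N -> (d < N)%N ->
       G d = \prod_(p < N | prime p) gq p (logn p d)) ->
    (forall p, prime p -> (B <= p)%N -> gq p 0%N = 1) ->
    (B <= M.+1)%N -> (M <= K)%N ->
    \prod_(p < M.+1 | prime p) \sum_(a < K.+1) gq p a =
    \sum_(1 <= d < M.+1) G d +
    \sum_(f : {ffun PT M.+1 -> 'I_K.+1} | (M.+1 <= dd f)%N) G (dd f).
  move=> G gq M K hm' h0' hB hMK.
  by rewrite (prod_sum_dd R G gq B M.+1 K.+1 hm' h0' hB) sum_dd_split.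
pose SA := fun N => \sum_(1 <= d < N) `|g d|.
have SA_nd : {homo SA : m n / (m <= n)%N >-> m <= n}.
  by apply: sum1_nd => d.
have SA_bd : forall N, SA N <= C.
  move=> N.
  apply: le_trans (_ : SA N <= SA (maxn N B).+1) _.
    by apply: SA_nd; rewrite (leq_trans (leq_maxl N B)).
  set M := maxn N B.
  have E := key (fun d => `|g d|) (fun p a => `|gp p a|) M M hmA h0A
     (leq_trans (leq_maxr N B) (leqnSn _)) (leqnn M).
  apply: le_trans (_ : _ <= \prod_(p < M.+1 | prime p) \sum_(a < M.+1) `|gp p a|) _.
    rewrite E lerDl; apply: sumr_ge0 => *; exact: normr_ge0.
  apply: le_trans (prod_bound c M.+1 c0).
  apply: ler_prod => p pp; rewrite hA // andbT.
  by apply: sumr_ge0 => *.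
have SAc : cvgn SA.
  apply: nondecreasing_is_cvgn => //.
  by exists C => _ [n _ <-]; apply: SA_bd.
set la := limn SA.
have SA_le : forall N, SA N <= la := nondecreasing_cvgn_le SA_nd SAc.
pose SP := fun N => \sum_(1 <= d < N) (`|g d| + g d).
have SP_nd : {homo SP : m n / (m <= n)%N >-> m <= n}.
  by apply: sum1_nd => d; rewrite -lerBlDr sub0r -normrN ler_norm.
have SPc : cvgn SP.
  apply: nondecreasing_is_cvgn => //.
  exists (2 * C) => _ [n _ <-].
  apply: le_trans (_ : SP n <= 2 * SA n) _.
    rewrite /SP /SA mulr_sumr; apply: ler_sum => d _.
    by rewrite mulr2n mulrDl mul1r lerD2l ler_norm.
  by rewrite ler_wpM2l // SA_bd.
pose SG := fun N => \sum_(1 <= d < N) g d.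
pose l := limn SP - la.
have SGc : SG @ \oo --> l.
  have -> : SG = (fun N => SP N - SA N).
    apply: funext => N; rewrite /SG /SP /SA /= -sumrB.
    by apply: eq_bigr => d _; rewrite addrAC subrr add0r.
  exact: cvgB.
exists l; split; first exact: SGc.
have tb : forall M, (B <= M.+1)%N ->
    `|\prod_(p < M.+1 | prime p) L p - SG M.+1| <= la - SA M.+1.
  move=> M hB.
  have cP : \prod_(p < M.+1 | prime p) \sum_(a < K) gp p a @[K --> \oo] -->
            \prod_(p < M.+1 | prime p) L p.
    apply: cvg_bigprod => i ip; exact: hL.
  apply: (ler_cvg_to (cvg_norm (cvgB cP (cvg_cst (SG M.+1)))) (cvg_cst (la - SA M.+1))).
  near=> K.
  have KM : (M.+1 <= K)%N by near: K; apply: nbhs_infty_ge.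
  have K0 : (0 < K)%N by apply: leq_trans KM.
  change (`|\prod_(p < M.+1 | prime p) \sum_(a < K) gp p a - SG M.+1| <= la - SA M.+1).
  rewrite -(prednK K0).
  rewrite (key g gp M K.-1 hm h0 hB); last by rewrite -ltnS prednK.
  rewrite /SG addrAC subrr add0r.
  have [Q hQ] := sum_dd_tail R (fun d => g d) M.+1 K.-1.+1.
  apply: le_trans (ler_norm_sum _ _ _) _.
  apply: le_trans hQ _.
  case: (leqP M.+1 Q) => hMQ.
    have EQ : SA Q = SA M.+1 + \sum_(M.+1 <= d < Q) `|g d|.
      by rewrite /SA (@big_cat_nat _ _ _ M.+1 1 Q).
    have := SA_le Q; rewrite EQ => h; lra.
  by rewrite big_geq ?(ltnW hMQ) // subr_ge0 SA_le.
pose P := fun N => \prod_(p < N | prime p) L p.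
have tc : (fun N => la - SA N) @ \oo --> 0.
  rewrite -(subrr la); apply: cvgB; [exact: cvg_cst | exact: SAc].
have Dc : (P - SG) @ \oo --> 0.
  apply/norm_cvg0P.
  apply: (@squeeze_cvgr _ _ _ _ (fun _ => 0) (fun N => la - SA N)); last 2 first.
  - exact: cvg_cst.
  - exact: tc.
  near=> N.
  have hN : (B.+1 <= N)%N by near: N; apply: nbhs_infty_ge.
  have N0 : (0 < N)%N by apply: leq_trans hN.
  change (0 <= `|P N - SG N| <= la - SA N).
  rewrite normr_ge0 /= -(prednK N0); apply: tb; rewrite prednK //; exact: ltnW.
have -> : (fun N => \prod_(p < N | prime p) L p) = (P - SG) + SG.
  by apply: funext => N; rewrite /= subrK.
rewrite -(add0r l); exact: cvgD.
Unshelve. all: by end_near.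
Qed.

End Euler.


Section Local.
Variable R : realType.

Definition mul_l (b : nat) : R := if b == 0%N then 1 else if b == 1%N then -1 else 0.

Definition Fp (e p a b : nat) : R :=
  ((e <= a + b)%N%:R * mul_l b) / ((p ^ (2 * a) * p ^ b * phl p (a + b))%N%:R).

Definition L1 (e p a : nat) : R := Fp e p a 0 + Fp e p a 1.

Definition rho (e p : nat) : R :=
  if e == 0%N then 1 else
  - ((p%:R : R) ^ (4%:Z - 3%:Z * e%:Z)) / ((p%:R : R) ^+ 3 - p%:R - 1).

Definition lam (e p : nat) : R := (1 - (p%:R : R) / ((p%:R : R) ^+ 3 - 1)) * rho e p.

Lemma phlE p k : (0 < p)%N -> (phl p k.+1)%:R = ((p%:R : R) - 1) * (p%:R) ^+ k.
Proof. by move=> p0; rewrite /= natrM natrX -subn1 natrB. Qed.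

Lemma Fp0E e p a : (0 < p)%N -> Fp e p a.+1 0 =
  (e <= a.+1)%N%:R / ((p%:R : R) ^+ (2 * a.+1) * (((p%:R : R) - 1) * (p%:R) ^+ a)).
Proof.
by move=> p0; rewrite /Fp /mul_l addn0 mulr1 !natrM !natrX -subn1 natrB // expr0 mulr1.
Qed.

Lemma Fp1E e p a : (0 < p)%N -> Fp e p a 1 =
  - (e <= a.+1)%N%:R / ((p%:R : R) ^+ (2 * a) * (p%:R) * (((p%:R : R) - 1) * (p%:R) ^+ a)).
Proof.
move=> p0; rewrite /Fp /mul_l /= addn1 !natrM !natrX -subn1 natrB // expr1.
by rewrite mulrN1 mulNr.
Qed.

Lemma Fp00E e p : Fp e p 0 0 = (e == 0%N)%:R.
Proof. by rewrite /Fp /mul_l /= muln1 divr1 mulr1 leqn0. Qed.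

Lemma P_facts (p : nat) : prime p ->
  let P := (p%:R : R) in
  [/\ 2 <= P, P != 0, P - 1 != 0, P ^+ 3 - 1 != 0 & P ^+ 3 - P - 1 != 0].
Proof.
move=> pp P.
have P2 : 2 <= P by rewrite /P (ler_nat R 2 p) prime_gt1.
split => //.
- by apply: lt0r_neq0; lra.
- by apply: lt0r_neq0; lra.
- by apply: lt0r_neq0; rewrite !exprS expr0 mulr1; nra.
- by apply: lt0r_neq0; rewrite !exprS expr0 mulr1; nra.
Qed.

Lemma L1_big e p k : prime p -> (e <= k.+1)%N ->
  L1 e p k.+1 = ((p%:R + 1) / p%:R) * (((p%:R : R) ^+ 3)^-1) ^+ k.+1.
Proof.
move=> pp ek; have p0 := prime_gt0 pp.
have [P2 Pn0 P1n0 _ _] := @P_facts p pp.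
rewrite /L1 Fp0E // Fp1E // ek (leq_trans ek (leqnSn _)) /=.
set P := (p%:R : R).
rewrite (_ : (2 * k.+1 = k + k + 2)%N); last by lia.
rewrite exprVn -exprM (_ : (3 * k.+1 = k + k + k + 3)%N); last by lia.
rewrite !exprD !exprS expr0 mulr1.
have Yn0 : P ^+ k != 0 by apply: expf_neq0.
field.
by rewrite Pn0 P1n0 Yn0.
Qed.

Lemma tail_cvg (u : nat -> R) (m : nat) (c x : R) : 0 <= x < 1 ->
  (forall a, (m <= a)%N -> u a = c * x ^+ a) ->
  \sum_(a < K) u a @[K --> \oo] --> \sum_(a < m) u a + c * (x ^+ m / (1 - x)).
Proof.
move=> /andP[x0 x1] hu.
rewrite -(cvg_shiftn m).
have -> : [sequence \sum_(a < n + m) u a]_n =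
          (fun n => \sum_(a < m) u a + c * series (geometric (x ^+ m) x) n).
  apply: funext => n /=.
  rewrite -!(big_mkord xpredT) (@big_cat_nat _ _ _ m 0 (n + m)) //=; last by rewrite leq_addl.
  congr (_ + _); rewrite addnC -geometric_partial_tail mulr_sumr big_nat_cond [RHS]big_nat_cond.
  by apply: eq_bigr => a /andP[/andP[ma _] _]; rewrite hu.
apply: cvgD; first exact: cvg_cst.
apply: cvgMl_tmp; apply: cvg_geometric_series.
by rewrite ger0_norm.
Qed.

Lemma L1_zero e p a : (a.+1 < e)%N -> L1 e p a = 0.
Proof.
move=> h; rewrite /L1 /Fp.
rewrite (_ : (e <= a + 0)%N = false); last by apply/negbTE; rewrite -ltnNge; lia.
rewrite (_ : (e <= a + 1)%N = false); last by apply/negbTE; rewrite -ltnNge; lia.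
by rewrite !mul0r addr0.
Qed.

Lemma LS e p : prime p -> \sum_(a < K) L1 e p a @[K --> \oo] --> lam e p.
Proof.
move=> pp; have p0 := prime_gt0 pp.
have [P2 Pn0 P1n0 P3n0 P4n0] := @P_facts p pp.
set P := (p%:R : R) in P2 Pn0 P1n0 P3n0 P4n0 *.
have x01 : 0 <= (P ^+ 3)^-1 < 1.
  rewrite invr_ge0 exprn_ge0 ?(le_trans _ P2) //= invf_lt1; last first.
    by rewrite exprn_gt0 // (lt_le_trans _ P2).
  by rewrite !exprS expr0 mulr1; nra.
have hu : forall a, (maxn e 1 <= a)%N ->
    L1 e p a = (P + 1) / P * ((P ^+ 3)^-1) ^+ a.
  move=> [|k]; first by rewrite geq_max andbF.
  by rewrite geq_max => /andP[ek _]; rewrite L1_big.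
suff E : \sum_(a < maxn e 1) L1 e p a +
   (P + 1) / P * (((P ^+ 3)^-1) ^+ (maxn e 1) / (1 - (P ^+ 3)^-1)) = lam e p.
  by rewrite -E; exact: tail_cvg x01 hu.
case: e {hu} => [|[|k]] /=.
- rewrite (_ : maxn 0 1 = 1%N) // big_ord1 /L1 Fp00E Fp1E // /= /lam /rho /= expr1.
  rewrite !exprS !expr0 !mulr1 !mul1r.
  move: P3n0; rewrite !exprS expr0 !mulr1 => P3n0.
  rewrite -/P.
  field.
  by apply/and3P.
- rewrite (_ : maxn 1 1 = 1%N) // big_ord1 /L1 Fp00E Fp1E // /= /lam /rho /=.
  rewrite (_ : (4%:Z - 3%:Z * 1%:Z) = 1) // expr1z expr1.
  rewrite !exprS !expr0 !mulr1 !mul1r.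
  move: P3n0 P4n0; rewrite !exprS expr0 !mulr1 => P3n0 P4n0.
  rewrite -/P.
  field.
  by apply/and4P.
- rewrite (_ : maxn k.+2 1 = k.+2) // big_ord_recr /= big1; last first.
    by move=> i _; apply: L1_zero; have := ltn_ord i; lia.
  rewrite add0r /L1 Fp1E // /Fp /mul_l /=.
  rewrite (_ : (k.+2 <= k.+1 + 0)%N = false); last by lia.
  rewrite mul0r mul0r add0r leqnn.
  rewrite /lam /rho /=.
  rewrite (_ : (4%:Z - 3%:Z * (k.+2)%:Z) = Negz (3 * k + 1)); last first.
    by rewrite NegzE; lia.
  rewrite /exprz -/P.
  rewrite (_ : (2 * k.+1 = k + k + 2)%N); last by lia.
  rewrite exprVn -exprM (_ : (3 * k.+2 = k + k + k + 6)%N); last by lia.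
  rewrite (_ : ((3 * k + 1).+1 = k + k + k + 2)%N); last by lia.
  rewrite !exprD !exprS !expr0 !mulr1.
  move: P3n0 P4n0; rewrite !exprS expr0 !mulr1 => P3n0 P4n0.
  have Yn0 : P ^+ k != 0 by apply: expf_neq0.
  field.
  by rewrite Yn0 P3n0 P4n0 Pn0 P1n0.
Qed.

End Local.


Lemma nat_pprodP (m N : nat) : (0 < m)%N ->
  (forall p, prime p -> (p %| m)%N -> (p < N)%N) ->
  m = (\prod_(p < N | prime p) p ^ logn p m)%N.
Proof.
move=> m0 mN.
rewrite (@pprod_primes _ 1%N muln m N (fun p => p ^ logn p m)%N) //.
- by rewrite {1}[m]prod_prime_decomp // prime_decompE big_map.
- by move=> p pp nd; rewrite logn_coprime ?expn0 // prime_coprime.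
Qed.

Section Mult.
Variable R : realType.

Lemma mobius_pprod j N : (0 < j)%N -> (j < N)%N ->
  ((mobius j)%:~R : R) = \prod_(p < N | prime p) mul_l R (logn p j).
Proof.
move=> j0 jN.
rewrite (@pprod_primes R 1 *%R j N (fun p => mul_l R (logn p j))) //; first last.
- by move=> p pp nd; rewrite logn_coprime // prime_coprime.
- by move=> p pp /(dvdn_leq j0) pj; apply: leq_ltn_trans jN.
rewrite /mobius j0 /=.
case: ifP => hall.
  rewrite intr_sign.
  rewrite (eq_big_seq (fun _ => -1)); last first.
    by move=> p pin; rewrite (eqP ((allP hall) p pin)).
  by elim: (primes j) => [|q s ih]; rewrite ?big_nil ?big_cons //= exprS ih.
have /allPn [p pin hp] : ~~ all (fun p => logn p j == 1%N) (primes j) by rewrite hall.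
apply/esym/eqP; rewrite prodf_seq_eq0; apply/hasP; exists p => //=.
move: pin hp; rewrite -logn_gt0 /mul_l.
by case: (logn p j) => [|[|k]].
Qed.

Lemma dvd_pprod n m N : (0 < n)%N -> (0 < m)%N -> (n < N)%N ->
  ((n %| m)%N%:R : R) = \prod_(p < N | prime p) (logn p n <= logn p m)%N%:R.
Proof.
move=> n0 m0 nN.
case: (boolP [exists p : 'I_N, prime p && (logn p m < logn p n)%N]).
  move=> /existsP [p /andP [pp hp]].
  rewrite (bigD1 p) //= leqNgt hp mul0r.
  case: (boolP (n %| m)%N) => // /(dvdn_logP _ _ n0 m0) /(_ p pp).
  by rewrite leqNgt hp.
move=> hn.
have H : forall p, prime p -> (logn p n <= logn p m)%N.
  move=> p pp; case: (ltnP p N) => hpN.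
    move: hn; rewrite negb_exists => /forallP /(_ (Ordinal hpN)).
    by rewrite /= pp /= -leqNgt.
  by rewrite ltn_log0 // (leq_trans nN hpN).
rewrite (introT (dvdn_logP _ _ n0 m0) H) big1 // => p pp.
by rewrite H.
Qed.

Lemma D_pprod i j N : (0 < i)%N -> (0 < j)%N -> (i < N)%N -> (j < N)%N ->
  ((i ^ 2 * j * totient (i * j))%N%:R : R) =
  \prod_(p < N | prime p)
     ((p ^ (2 * logn p i) * p ^ logn p j * phl p (logn p i + logn p j))%N%:R).
Proof.
move=> i0 j0 iN jN.
rewrite -natr_prod; congr (_%:R).
rewrite !big_split /=.
have bnd : forall m, (0 < m)%N -> (m < N)%N -> forall p, prime p -> (p %| m)%N -> (p < N)%N.
  by move=> m m0 mN p pp /(dvdn_leq m0) pm; apply: leq_ltn_trans mN.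
congr (_ * _ * _)%N.
- rewrite {1}(@nat_pprodP (i ^ 2) N) ?expn_gt0 ?i0 //; last first.
    move=> p pp; rewrite Euclid_dvdX // => /andP [pi _].
    exact: bnd i0 iN p pp pi.
  by apply: eq_bigr => p _; rewrite lognX mulnC.
- exact: nat_pprodP (bnd _ j0 jN).
- rewrite (@totient_pprod (i * j) N) ?muln_gt0 ?i0 ?j0 //; last first.
    move=> p pp; rewrite Euclid_dvdM // => /orP [h|h].
      exact: bnd i0 iN p pp h.
    exact: bnd j0 jN p pp h.
  by apply: eq_bigr => p _; rewrite lognM.
Qed.

Lemma term_pprod n i j N : (0 < n)%N -> (0 < i)%N -> (0 < j)%N ->
  (n < N)%N -> (i < N)%N -> (j < N)%N ->
  ((n %| i * j)%N%:R : R) * term R i j =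
  \prod_(p < N | prime p) Fp R (logn p n) p (logn p i) (logn p j).
Proof.
move=> n0 i0 j0 nN iN jN.
rewrite /term (@dvd_pprod n (i * j) N) ?muln_gt0 ?i0 ?j0 //.
rewrite (@mobius_pprod j N) // (@D_pprod i j N) //.
rewrite /Fp prodf_div big_split /= mulrA.
congr (_ * _ / _).
by apply: eq_bigr => p _; rewrite lognM.
Qed.

End Mult.


Section Stage1.
Variable R : realType.

Lemma phl_gt0 p k : (1 < p)%N -> (0 < phl p k)%N.
Proof. by move=> p1; case: k => //= k; rewrite muln_gt0 expn_gt0 -subn1 subn_gt0 p1 (ltnW p1). Qed.

Lemma Fp_big e p a b : (2 <= b)%N -> Fp R e p a b = 0.
Proof. by case: b => [|[|b]] // _; rewrite /Fp /mul_l /= mulr0 mul0r. Qed.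

Lemma Fp_abs0 e p a : prime p -> `|Fp R e p a 0| <= 1.
Proof.
move=> pp; have p1 := prime_gt1 pp.
have D0 : (0 < p ^ (2 * a) * p ^ 0 * phl p (a + 0))%N.
  by rewrite !muln_gt0 !expn_gt0 (ltnW p1) phl_gt0.
rewrite /Fp /mul_l /= mulr1 ger0_norm ?divr_ge0 // ler_pdivrMr ?ltr0n // mul1r ler_nat.
exact: leq_trans (leq_b1 _) D0.
Qed.

Lemma div_le_inv (x Z W : R) : 0 <= x <= 1 -> 0 < Z -> 1 <= W -> `|x / (Z * W)| <= Z^-1.
Proof.
move=> /andP[x0 x1] Z0 W1.
have ZW : 0 < Z * W by apply: mulr_gt0 => //; lra.
rewrite ger0_norm; last by apply: divr_ge0 => //; apply: ltW.
rewrite ler_pdivrMr //.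
rewrite mulrA mulVf ?gt_eqF // mul1r; lra.
Qed.

Lemma Fp_abs1 e p a : prime p -> `|Fp R e p a 1| <= 2 / ((p%:R : R) ^+ 2).
Proof.
move=> pp; have p0 := prime_gt0 pp.
have [P2 Pn0 P1n0 _ _] := @P_facts R p pp.
rewrite Fp1E // mulNr normrN.
set P := (p%:R : R) in P2 Pn0 P1n0 *.
have Y1 : 1 <= P ^+ (2 * a) by apply: exprn_ege1; lra.
have Y2 : 1 <= P ^+ a by apply: exprn_ege1; lra.
rewrite (_ : P ^+ (2 * a) * P * ((P - 1) * P ^+ a) = (P * (P - 1)) * (P ^+ (2 * a) * P ^+ a)); last by ring.
have hx : 0 <= ((e <= a.+1)%N%:R : R) <= 1 by rewrite ler0n /= lern1 leq_b1.
have hZ : 0 < P * (P - 1) by apply: mulr_gt0; lra.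
have hW : 1 <= P ^+ (2 * a) * P ^+ a by rewrite -[1]mulr1; apply: ler_pM => //; lra.
have hh := div_le_inv _ _ _ hx hZ hW.
apply: (le_trans hh).
rewrite -[X in X <= _]div1r ler_pdivrMr; last by apply: mulr_gt0; lra.
have -> : 2 / P ^+ 2 * (P * (P - 1)) = 2 * (P - 1) / P by field.
rewrite ler_pdivlMr; lra.
Qed.

Lemma sumFp_abs e p a K : prime p ->
  \sum_(b < K) `|Fp R e p a b| <= 1 + 2 / ((p%:R : R) ^+ 2).
Proof.
move=> pp.
have h2 : 0 <= 2 / ((p%:R : R) ^+ 2) by rewrite divr_ge0 // exprn_ge0.
case: K => [|[|K]].
- by rewrite big_ord0; lra.
- by rewrite big_ord1; have := Fp_abs0 e p a pp; lra.
rewrite !big_ord_recl big1; last by move=> b _; rewrite Fp_big ?normr0.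
rewrite addr0 /=.
by apply: lerD; [exact: Fp_abs0 | exact: Fp_abs1].
Qed.

Lemma sumFp_cvg e p a : \sum_(b < K) Fp R e p a b @[K --> \oo] --> L1 R e p a.
Proof.
apply: cvg_near_cst; near=> K.
have K2 : (2 <= K)%N by near: K; apply: nbhs_infty_ge.
rewrite -(subnK K2) addn2 !big_ord_recl big1 ?addr0 //.
by move=> b _; apply: Fp_big.
Unshelve. all: by end_near.
Qed.

End Stage1.


Section Stage1b.
Variable R : realType.

Lemma stage1 n i : (0 < n)%N -> (0 < i)%N -> exists l : R,
  (\sum_(1 <= j < M | (n %| i * j)%N) term R i j @[M --> \oo] --> l) /\
  (\prod_(p < N | prime p) L1 R (logn p n) p (logn p i) @[N --> \oo] --> l).
Proof.
move=> n0 i0.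
have hm : forall d N, (0 < d)%N -> ((i + n).+1 <= N)%N -> (d < N)%N ->
    ((n %| i * d)%N%:R : R) * term R i d =
    \prod_(p < N | prime p) Fp R (logn p n) p (logn p i) (logn p d).
  move=> d N d0 hB dN; apply: term_pprod => //.
  + by apply: leq_trans hB; rewrite ltnS leq_addl.
  + by apply: leq_trans hB; rewrite ltnS leq_addr.
have h0 : forall p, prime p -> ((i + n).+1 <= p)%N -> Fp R (logn p n) p (logn p i) 0 = 1.
  move=> p pp hp.
  rewrite (@ltn_log0 p n) ?(@ltn_log0 p i) ?Fp00E //.
  + by apply: leq_trans hp; rewrite ltnS leq_addr.
  + by apply: leq_trans hp; rewrite ltnS leq_addl.
have hL : forall p, prime p -> \sum_(b < K) Fp R (logn p n) p (logn p i) b @[K --> \oo] -->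
    L1 R (logn p n) p (logn p i).
  by move=> p pp; exact: sumFp_cvg.
have hA : forall p K, prime p -> \sum_(b < K) `|Fp R (logn p n) p (logn p i) b| <=
    1 + 2 / ((p%:R : R) ^+ 2).
  by move=> p K pp; exact: sumFp_abs.
have [l [h1 h2]] := @euler R (fun j => ((n %| i * j)%N%:R : R) * term R i j)
   (fun p b => Fp R (logn p n) p (logn p i) b)
   (fun p => L1 R (logn p n) p (logn p i)) (i + n).+1 2 (ler0n R 2) hm h0 hL hA.
exists l; split => //.
suff -> : (fun M => \sum_(1 <= j < M | (n %| i * j)%N) term R i j) =
          (fun M => \sum_(1 <= j < M) ((n %| i * j)%N%:R : R) * term R i j) by [].
apply: funext => M; rewrite big_mkcond /=; apply: eq_bigr => j _.
by case: ifP; rewrite ?mul1r ?mul0r.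
Qed.

Definition alpha (p : nat) : R := L1 R 0 p 0.

Lemma alphaE p : prime p -> alpha p = 1 - ((p%:R : R) * (p%:R - 1))^-1.
Proof.
move=> pp; have p0 := prime_gt0 pp.
have [P2 Pn0 P1n0 _ _] := @P_facts R p pp.
rewrite /alpha /L1 Fp00E Fp1E //= expr0 !mul1r.
by field; rewrite Pn0 P1n0.
Qed.

Lemma alpha_bounds p : prime p -> 2^-1 <= alpha p <= 1.
Proof.
move=> pp; have [P2 Pn0 P1n0 _ _] := @P_facts R p pp.
rewrite alphaE //.
set P := (p%:R : R) in P2 Pn0 P1n0 *.
have t2 : 2 <= P * (P - 1) by nra.
have ti : 0 < (P * (P - 1))^-1 <= 2^-1.
  rewrite invr_gt0 (lt_le_trans _ t2) //= lef_pV2 ?posrE //; lra.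
lra.
Qed.

Lemma alpha_neq0 p : prime p -> alpha p != 0.
Proof. by move=> pp; have := alpha_bounds p pp; move=> h; apply: lt0r_neq0; lra. Qed.

Lemma prod01_cvg (F : nat -> R) : (forall p, prime p -> 0 <= F p <= 1) ->
  cvgn (fun N => \prod_(p < N | prime p) F p).
Proof.
move=> hF.
apply: nonincreasing_is_cvgn.
  move=> m k mk /=.
  rewrite -!(big_mkord (fun p => prime p)) (@big_cat_nat _ _ _ m 0 k) //=.
  apply: ler_piMr; first by apply: prodr_ge0 => p pp; have /andP[] := hF p pp.
  by apply: prodr_ile1 => p pp; exact: hF.
exists 0 => _ [N _ <-].
by apply: prodr_ge0 => p pp; have /andP[] := hF p pp.
Qed.

End Stage1b.


Section Stage2.
Variable R : realType.

Definition hfun (n i : nat) : R :=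
  \prod_(p < (i + n).+1 | prime p) (L1 R (logn p n) p (logn p i) / alpha R p).

Definition Aconst : R := limn (fun N => \prod_(p < N | prime p) alpha R p).

Lemma alpha_cvg : \prod_(p < N | prime p) alpha R p @[N --> \oo] --> Aconst.
Proof.
apply: (@prod01_cvg R (alpha R)) => p pp.
by have := alpha_bounds R p pp => /andP[h1 h2]; rewrite h2 andbT; apply: le_trans h1; rewrite invr_ge0.
Qed.

Lemma h_ext n i N : (maxn i n < N)%N ->
  hfun n i = \prod_(p < N | prime p) (L1 R (logn p n) p (logn p i) / alpha R p).
Proof.
move=> hN; rewrite /hfun.
apply: (@pprod_ext R 1 *%R (maxn i n).+1 (i + n).+1 N
  (fun p => L1 R (logn p n) p (logn p i) / alpha R p)) => //.
- move=> p pp hp.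
  rewrite (@ltn_log0 p i) ?(@ltn_log0 p n); first last.
  + by apply: leq_trans hp; rewrite ltnS leq_maxl.
  + by apply: leq_trans hp; rewrite ltnS leq_maxr.
  by change (alpha R p / alpha R p = 1); rewrite divff // alpha_neq0.
- by rewrite ltnS geq_max leq_addr leq_addl.
Qed.

Lemma inner_eq n i : (0 < n)%N -> (0 < i)%N ->
  limn (fun M => \sum_(1 <= j < M | (n %| i * j)%N) term R i j) = Aconst * hfun n i.
Proof.
move=> n0 i0.
have [l [h1 h2]] := stage1 R n i n0 i0.
have h3 : \prod_(p < N | prime p) L1 R (logn p n) p (logn p i) @[N --> \oo] -->
          Aconst * hfun n i.
  have E : {near \oo, (fun N => (\prod_(p < N | prime p) alpha R p) * hfun n i) =1
           (fun N => \prod_(p < N | prime p) L1 R (logn p n) p (logn p i))}.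
    near=> N.
    have hN : ((maxn i n).+1 <= N)%N by near: N; apply: nbhs_infty_ge.
    rewrite /= (h_ext _ _ _ hN) -big_split /=; apply: eq_bigr => p pp.
    by rewrite mulrC divfK // alpha_neq0.
  apply: cvg_trans (near_eq_cvg E) _.
  exact: cvgMr_tmp alpha_cvg.
rewrite (cvg_lim _ h1) //.
by have := cvg_lim _ h2; rewrite (cvg_lim _ h3) // => <-.
Unshelve. all: by end_near.
Qed.

End Stage2.


Section Stage2b.
Variable R : realType.

Definition wv (ev : bool) (i : nat) : R := if ev then (2 %| i)%N%:R else 1.
Definition wl (ev : bool) (p a : nat) : R :=
  if ev && (p == 2%N) && (a == 0%N) then 0 else 1.
Definition gp2 (n : nat) (ev : bool) (p a : nat) : R :=
  wl ev p a * (L1 R (logn p n) p a / alpha R p).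
Definition corr (n : nat) (ev : bool) (p : nat) : R :=
  if ev && (p == 2%N) then L1 R (logn p n) p 0 else 0.
Definition M2 (n : nat) (ev : bool) (p : nat) : R :=
  (lam R (logn p n) p - corr n ev p) / alpha R p.

Lemma wv_pprod ev i N : (0 < i)%N -> (2 < N)%N ->
  wv ev i = \prod_(p < N | prime p) wl ev p (logn p i).
Proof.
move=> i0 N2.
case: ev; last by rewrite big1.
rewrite (bigD1 (Ordinal N2)) //= big1 ?mulr1; last first.
  move=> p /andP[_ ne]; rewrite /wl.
  rewrite (_ : (nat_of_ord p == 2%N) = false) //.
  by apply/negbTE; apply: contra ne => /eqP e; apply/eqP; apply: val_inj.
have -> : (2 %| i)%N = (logn 2 i != 0%N) by rewrite -lt0n logn_gt0 mem_primes i0.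
by rewrite /wl /=; case: (logn 2 i == 0%N).
Qed.

Lemma geo_le (y : R) K : 0 <= y < 1 -> \sum_(a < K) y ^+ a <= (1 - y)^-1.
Proof.
move=> /andP[y0 y1].
have h : \sum_(a < K) y ^+ a = (1 - y ^+ K) / (1 - y).
  apply: (@mulIf _ (1 - y)); first by apply: lt0r_neq0; lra.
  rewrite divfK; last by apply: lt0r_neq0; lra.
  by rewrite mulrC -[1 - y]opprB mulNr -subrX1 opprB.
rewrite h ler_pdivrMr; last by lra.
rewrite mulVf; last by apply: lt0r_neq0; lra.
by rewrite gerBl exprn_ge0.
Qed.

Lemma L1_abs_pos e p a : prime p ->
  `|L1 R e p a.+1| <= 2 * (((p%:R : R) ^+ 2)^-1) ^+ a.+1.
Proof.
move=> pp; have p0 := prime_gt0 pp.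
have [P2 Pn0 P1n0 _ _] := @P_facts R p pp.
rewrite /L1 exprVn -exprM mulr2n mulrDl mul1r.
apply: le_trans (ler_normD _ _) _.
apply: lerD.
- rewrite Fp0E //.
  set P := (p%:R : R) in P2 Pn0 P1n0 *.
  apply: div_le_inv.
  + by rewrite ler0n /= lern1 leq_b1.
  + by apply: exprn_gt0; lra.
  + rewrite -[1]mulr1; apply: ler_pM => //; first lra.
    by apply: exprn_ege1; lra.
- rewrite Fp1E // mulNr normrN -mulrA.
  set P := (p%:R : R) in P2 Pn0 P1n0 *.
  apply: div_le_inv.
  + by rewrite ler0n /= lern1 leq_b1.
  + by apply: exprn_gt0; lra.
  + rewrite -[1]mulr1; apply: ler_pM => //; first lra.
    rewrite -[1]mulr1; apply: ler_pM => //; first lra.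
    by apply: exprn_ege1; lra.
Qed.

End Stage2b.


Section Stage2c.
Variable R : realType.

Lemma L1_abs0_le_alpha e p : prime p -> `|L1 R e p 0| <= alpha R p.
Proof.
move=> pp; have p0 := prime_gt0 pp.
have [P2 Pn0 P1n0 _ _] := @P_facts R p pp.
have ab := alpha_bounds R p pp.
rewrite alphaE // in ab *.
rewrite /L1 Fp00E Fp1E //= expr0 !mul1r.
set P := (p%:R : R) in P2 Pn0 P1n0 ab *.
have t2 : 2 <= P * (P - 1) by nra.
have ti : 0 < (P * (P - 1))^-1 <= 2^-1.
  rewrite invr_gt0 (lt_le_trans _ t2) //= lef_pV2 ?posrE //; lra.
case: e => [|[|e]] /=.
- by rewrite mulNr ger0_norm; lra.
- by rewrite add0r mulNr normrN mul1r ger0_norm; lra.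
- by rewrite oppr0 mul0r addr0 normr0; lra.
Qed.

Lemma gp2_abs n ev p K : prime p ->
  \sum_(a < K) `|gp2 R n ev p a| <= 1 + 8 / ((p%:R : R) ^+ 2).
Proof.
move=> pp; have [P2 Pn0 P1n0 _ _] := @P_facts R p pp.
have ab := alpha_bounds R p pp.
have a0 : 0 < alpha R p by apply: lt_le_trans (andP ab).1; rewrite invr_gt0.
set y := ((p%:R : R) ^+ 2)^-1.
have y0 : 0 <= y by rewrite invr_ge0 exprn_ge0 //; lra.
have y4 : y <= 4^-1.
  rewrite /y lef_pV2 ?posrE ?exprn_gt0 //; try lra.
  by rewrite expr2; nra.
have hy : 8 / ((p%:R : R) ^+ 2) = 8 * y by [].
have w1 : forall a, `|wl R ev p a| <= 1.
  by move=> a; rewrite /wl; case: ifP; rewrite ?normr0 ?normr1 //.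
case: K => [|K]; first by rewrite big_ord0; nra.
rewrite big_ord_recl /=.
apply: lerD.
  rewrite /gp2 normrM -[1]mul1r; apply: ler_pM => //.
  rewrite normrM normfV (ger0_norm (ltW a0)) ler_pdivrMr // mul1r.
  exact: L1_abs0_le_alpha.
apply: le_trans (_ : \sum_(a < K) 4 * y * y ^+ a <= _).
  apply: ler_sum => a _.
  rewrite /gp2 /wl /= andbF mul1r normrM normfV (ger0_norm (ltW a0)) ler_pdivrMr //.
  apply: le_trans (L1_abs_pos R _ _ _ pp) _.
  rewrite -/y exprS.
  have ya : 0 <= y ^+ a by apply: exprn_ge0.
  have hya : 0 <= y * y ^+ a by apply: mulr_ge0.
  have := andP ab => -[h1 _].
  nra.
rewrite -mulr_sumr.
have hg : \sum_(a < K) y ^+ a <= (1 - y)^-1.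
  by apply: geo_le; apply/andP; split => //; lra.
have hs : 0 <= \sum_(a < K) y ^+ a by apply: sumr_ge0 => a _; apply: exprn_ge0.
have h12 : (1 - y)^-1 <= 2.
  rewrite -[2]invrK lef_pV2 ?posrE; try lra.
have : \sum_(a < K) y ^+ a <= 2 by apply: le_trans hg h12.
nra.
Qed.

Lemma stage2 n ev : (0 < n)%N -> exists l2 : R,
  (\sum_(1 <= i < N) wv R ev i * hfun R n i @[N --> \oo] --> l2) /\
  (\prod_(p < N | prime p) M2 R n ev p @[N --> \oo] --> l2).
Proof.
move=> n0.
have hm : forall d N, (0 < d)%N -> (n.+3 <= N)%N -> (d < N)%N ->
    wv R ev d * hfun R n d = \prod_(p < N | prime p) gp2 R n ev p (logn p d).
  move=> d N d0 hB dN.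
  rewrite /gp2 big_split /= -wv_pprod //; last by apply: leq_trans hB.
  rewrite -(h_ext R n d N) // gtn_max dN /=.
  lia.
have h0 : forall p, prime p -> (n.+3 <= p)%N -> gp2 R n ev p 0 = 1.
  move=> p pp hp; rewrite /gp2 /wl.
  rewrite (_ : (p == 2%N) = false); last by apply/negbTE/eqP; lia.
  rewrite andbF mul1r (@ltn_log0 p n); last by lia.
  by change (alpha R p / alpha R p = 1); rewrite divff // alpha_neq0.
have hL : forall p, prime p -> \sum_(a < K) gp2 R n ev p a @[K --> \oo] --> M2 R n ev p.
  move=> p pp.
  have E : {near \oo, (fun K => (\sum_(a < K) L1 R (logn p n) p a - corr R n ev p) / alpha R p) =1
           (fun K => \sum_(a < K) gp2 R n ev p a)}.
    near=> K.
    have K0 : (0 < K)%N by near: K; apply: nbhs_infty_ge.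
    rewrite /= -(prednK K0) -!(big_mkord xpredT) !big_nat_recl //.
    rewrite /gp2 /wl /corr.
    under [X in _ = _ + X]eq_bigr do rewrite andbF mul1r.
    rewrite -mulr_suml.
    case: (ev && (p == 2%N)) => /=.
      by rewrite mul0r add0r addrAC subrr add0r.
    by rewrite subr0 mul1r mulrDl.
  apply: cvg_trans (near_eq_cvg E) _.
  apply: cvgMr_tmp; apply: cvgB; [exact: LS | exact: cvg_cst].
have hA : forall p K, prime p -> \sum_(a < K) `|gp2 R n ev p a| <= 1 + 8 / ((p%:R : R) ^+ 2).
  by move=> p K pp; exact: gp2_abs.
have [l [h1 h2]] := @euler R (fun i => wv R ev i * hfun R n i) (gp2 R n ev) (M2 R n ev)
   n.+3 8 (ler0n R 8) hm h0 hL hA.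
by exists l.
Unshelve. all: by end_near.
Qed.

End Stage2c.


Section Final.
Variable R : realType.

Definition inner (n i : nat) : R :=
  limn (fun M => \sum_(1 <= j < M | (n %| i * j)%N) term R i j).

Definition Pprod (N : nat) : R :=
  \prod_(p < N | prime p) (1 - (p%:R : R) / ((p%:R : R) ^+ 3 - 1)).

Lemma Pprod_cvg : Pprod N @[N --> \oo] --> S_const R.
Proof.
apply: (@prod01_cvg R (fun p => 1 - (p%:R : R) / ((p%:R : R) ^+ 3 - 1))) => p pp.
have [P2 Pn0 P1n0 P3n0 _] := @P_facts R p pp.
set P := (p%:R : R) in P2 Pn0 P1n0 P3n0 *.
have h3 : P + 1 <= P ^+ 3 - 1 by rewrite !exprS expr0 mulr1; nra.
have h0 : 0 < P ^+ 3 - 1 by lra.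
have h1 : 0 <= P / (P ^+ 3 - 1) by apply: divr_ge0; lra.
have h2 : P / (P ^+ 3 - 1) <= 1 by rewrite ler_pdivrMr // mul1r; lra.
apply/andP; split; lra.
Qed.

Lemma outer_cvg n ev : (0 < n)%N -> exists l2 : R,
  (\sum_(1 <= i < N) wv R ev i * inner n i @[N --> \oo] --> Aconst R * l2) /\
  (\prod_(p < N | prime p) M2 R n ev p @[N --> \oo] --> l2).
Proof.
move=> n0.
have [l2 [h1 h2]] := stage2 R n ev n0.
exists l2; split => //.
have -> : (fun N => \sum_(1 <= i < N) wv R ev i * inner n i) =
          (fun N => Aconst R * \sum_(1 <= i < N) wv R ev i * hfun R n i).
  apply: funext => N; rewrite mulr_sumr big_nat_cond [RHS]big_nat_cond.
  apply: eq_bigr => i /andP[/andP[i1 _] _].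
  by rewrite /inner inner_eq // mulrCA.
exact: cvgMl_tmp h1.
Qed.

Lemma prod_lam n N : (0 < n)%N -> (n < N)%N ->
  \prod_(p < N | prime p) lam R (logn p n) p = r_fun R n * Pprod N.
Proof.
move=> n0 nN.
rewrite /lam big_split /= mulrC; congr (_ * _).
rewrite (@pprod_primes R 1 *%R n N (fun p => rho R (logn p n) p)) //; first last.
- by move=> p pp nd; rewrite logn_coprime // prime_coprime.
- by move=> p pp /(dvdn_leq n0) pn; apply: leq_ltn_trans nN.
rewrite /r_fun; apply: eq_big_seq => p.
rewrite -logn_gt0 /rho; case: (logn p n) => //.
Qed.

Lemma aM2 n ev p : prime p -> alpha R p * M2 R n ev p = lam R (logn p n) p - corr R n ev p.
Proof. by move=> pp; rewrite /M2 mulrC divfK // alpha_neq0. Qed.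

Lemma final_gen n ev (k : R) : (0 < n)%N ->
  (forall N, (n < N)%N -> (2 < N)%N ->
     \prod_(p < N | prime p) (lam R (logn p n) p - corr R n ev p) =
     k * \prod_(p < N | prime p) lam R (logn p n) p) ->
  limn (fun N => \sum_(1 <= i < N) wv R ev i * inner n i) = k * r_fun R n * S_const R.
Proof.
move=> n0 hk.
have [l2 [h1 h2]] := outer_cvg n ev n0.
rewrite (cvg_lim _ h1) //.
have c1 : \prod_(p < N | prime p) (alpha R p * M2 R n ev p) @[N --> \oo] --> Aconst R * l2.
  have -> : (fun N => \prod_(p < N | prime p) (alpha R p * M2 R n ev p)) =
            (fun N => (\prod_(p < N | prime p) alpha R p) * \prod_(p < N | prime p) M2 R n ev p).
    by apply: funext => N; rewrite big_split.
  exact: cvgM (alpha_cvg R) h2.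
have c2 : \prod_(p < N | prime p) (alpha R p * M2 R n ev p) @[N --> \oo] -->
          k * r_fun R n * S_const R.
  have E : {near \oo, (fun N => k * r_fun R n * Pprod N) =1
      (fun N => \prod_(p < N | prime p) (alpha R p * M2 R n ev p))}.
    near=> N.
    have hN : ((maxn n 2).+1 <= N)%N by near: N; apply: nbhs_infty_ge.
    rewrite /= (eq_bigr (fun p : 'I_N => lam R (logn p n) p - corr R n ev p)); last first.
      by move=> p pp; exact: aM2.
    rewrite hk; first last.
    - by move: hN; rewrite gtn_max => /andP[].
    - by move: hN; rewrite gtn_max => /andP[].
    by rewrite prod_lam // ?mulrA //; move: hN; rewrite gtn_max => /andP[].
  apply: cvg_trans (near_eq_cvg E) _.
  exact: cvgMl_tmp Pprod_cvg.
by have := cvg_lim _ c1; rewrite (cvg_lim _ c2) // => ->.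
Unshelve. all: by end_near.
Qed.

End Final.


Section Main.
Variable R : realType.

Lemma lam_2 : lam R 0 2 - L1 R 0 2 0 = 3%:R / 10%:R * lam R 0 2.
Proof.
change (L1 R 0 2 0) with (alpha R 2).
rewrite alphaE // /lam /rho /= mulr1.
rewrite !exprS expr0 !mulr1.
field.
by [].
Qed.

Lemma corr0_hk n ev : (forall p, corr R n ev p = 0) ->
  forall N, (n < N)%N -> (2 < N)%N ->
  \prod_(p < N | prime p) (lam R (logn p n) p - corr R n ev p) =
  1 * \prod_(p < N | prime p) lam R (logn p n) p.
Proof.
move=> h N _ _; rewrite mul1r; apply: eq_bigr => p _.
by rewrite h subr0.
Qed.

Lemma odd_hk n : odd n ->
  forall N, (n < N)%N -> (2 < N)%N ->
  \prod_(p < N | prime p) (lam R (logn p n) p - corr R n true p) =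
  3%:R / 10%:R * \prod_(p < N | prime p) lam R (logn p n) p.
Proof.
move=> on N _ N2.
have l2 : logn 2 n = 0%N.
  by rewrite logn_coprime // prime_coprime // dvdn2 on.
rewrite (bigD1 (Ordinal N2)) //= [in RHS](bigD1 (Ordinal N2)) //=.
rewrite {1}/corr /= l2 lam_2 [RHS]mulrA; congr (_ * _).
apply: eq_bigr => p /andP[_ ne].
rewrite /corr (_ : (nat_of_ord p == 2%N) = false) ?andbF ?subr0 //.
by apply/negbTE; apply: contra ne => /eqP e; apply/eqP; apply: val_inj.
Qed.

End Main.

Theorem corollary4p3 (R : realType) (n : nat) (hn : (1 <= n)%N) :
  S1 R n = r_fun R n * S_const R /\
  (odd n -> S2' R n = 3%:R / 10%:R * r_fun R n * S_const R) /\
  ((4 %| n)%N -> S2' R n = r_fun R n * S_const R).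
Proof.
have eS1 : S1 R n = limn (fun N => \sum_(1 <= i < N) wv R false i * inner R n i).
  rewrite /S1; rewrite -/(limn _); do 2 f_equal; apply: funext => N.
  by apply: eq_bigr => i _; rewrite /wv mul1r.
have eS2 : S2' R n = limn (fun N => \sum_(1 <= i < N) wv R true i * inner R n i).
  rewrite /S2'; rewrite -/(limn _); do 2 f_equal; apply: funext => N.
  rewrite big_mkcond /=; apply: eq_bigr => i _.
  by rewrite /wv; case: ifP; rewrite ?mul1r ?mul0r.
split; [|split].
- rewrite eS1 (@final_gen R n false 1 hn) ?mul1r //.
  by apply: corr0_hk.
- move=> on; rewrite eS2 (@final_gen R n true (3%:R / 10%:R) hn) //.
  exact: odd_hk.
- move=> h4; rewrite eS2 (@final_gen R n true 1 hn) ?mul1r //.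
  apply: corr0_hk => p; rewrite /corr /=.
  case: eqP => // ->.
  apply: L1_zero.
  have h : (2 ^ 2 %| n)%N by exact: h4.
  by rewrite pfactor_dvdn in h.
Qed.
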